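(* Let $\beta$ be a totally positive quadratic integer with minimal polynomial $x^2 - Ex + C$, where $E, C \in \mathbb{Z}_{\geq 1}$, and let $n \geq 0$ be an integer. If $f \in \mathbb{Z}_{\geq 0}[x]$ satisfies $f(\beta) = E\beta^n$ and $f(x) \neq Ex^n$, then $f$ has the form \[ f(x) = x^{n+1} + a_n x^n + \dots + a_1 x + a_0 \] for some $a_0, \ldots, a_n \in \mathbb{Z}_{\geq 0}$.
   Context: A quadratic integer is a root of a monic irreducible quadratic polynomial in $\mathbb{Z}[x]$; it is totally positive if both it and its conjugate are positive real numbers. *)

(* Defs.v *)
From HB Require Import structures.
From mathcomp Require Import all_boot all_order all_algebra.
From mathcomp Require Import reals.
Set Implicit Arguments. Unset Strict Implicit. Unset Printing Implicit Defensive.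
Import Order.TTheory GRing.Theory Num.Theory.
Local Open Scope ring_scope.

Definition quad_poly (E C : int) : {poly int} := 'X^2 - E *: 'X + C%:P.

Definition is_quadratic_integer_with_minpoly (R : realType) (p : {poly int}) (b : R) :=
  [/\ p \is monic, size p = 3%N, irreducible_poly p & root (map_poly intr p) b].

(* Totally positive: beta and its conjugate (the other root of the minimal
   polynomial) are positive reals; since the minimal polynomial has real
   coefficients and one real root, the conjugate is also real, so this says
   every real root of p is positive. *)
Definition totally_positive (R : realType) (p : {poly int}) (b : R) :=
  0 < b /\ forall z : R, root (map_poly intr p) z -> 0 < z.

Definition nonneg_coefs (f : {poly int}) := forall i, 0 <= f`_i.

(* Main.v *)
Require Import Defs.
From HB Require Import structures.
From mathcomp Require Import all_boot all_order all_algebra.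
From mathcomp Require Import reals.
From mathcomp Require Import ring lra zify.
Import Order.TTheory GRing.Theory Num.Theory.
Local Open Scope ring_scope.

Lemma hornerW (f : {poly int}) (N : nat) (R : realType) (x : R) : (size f <= N)%N ->
  (map_poly intr f).[x] = \sum_(i < N) (f`_i)%:~R * x ^+ i.
Proof.
move=> hN; rewrite (@horner_coef_wide _ N); last first.
  by rewrite size_map_inj_poly //; exact: intr_inj.
by apply: eq_bigr => i _; rewrite coef_map.
Qed.

Lemma qval (R : realType) (E C : nat) (x : R) :
  (map_poly intr (quad_poly E%:Z C%:Z)).[x] = x ^+ 2 - E%:R * x + C%:R.
Proof.
rewrite /quad_poly rmorphD rmorphB /= map_polyXn map_polyZ map_polyX map_polyC /=.
by rewrite !hornerE.
Qed.

Lemma no_lin_root (R : realType) (E C : nat) (beta : R)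
  (hmin : is_quadratic_integer_with_minpoly (quad_poly E%:Z C%:Z) beta)
  (a b : int) : a%:~R * beta + b%:~R = 0 -> a = 0.
Proof.
case: hmin => hmon hsz hirr hroot hab.
apply/eqP/negPn/negP => ha.
move/eqP: hroot; rewrite qval => hq.
have hI : (b ^+ 2 + E%:Z * a * b + C%:Z * a ^+ 2)%:~R = 0 :> R.
  have hb : b%:~R = - (a%:~R * beta) :> R by apply: (addrI (a%:~R * beta)); rewrite hab subrr.
  rewrite rmorphD rmorphD /= !rmorphM /= hb.
  idtac.
  have -> : (E%:Z)%:~R = E%:R :> R by [].
  have -> : (C%:Z)%:~R = C%:R :> R by [].
  rewrite -[RHS](mulr0 (a%:~R ^+ 2)) -hq; ring.
move/eqP: hI; rewrite intr_eq0 => /eqP hI.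
set p1 : {poly int} := a%:P * 'X + b%:P.
set p2 : {poly int} := a%:P * 'X - (E%:Z * a + b)%:P.
have hp : p1 * p2 = (a ^+ 2) *: quad_poly E%:Z C%:Z.
  apply/eqP; rewrite -subr_eq0; apply/eqP.
  have -> : p1 * p2 - a ^+ 2 *: quad_poly E%:Z C%:Z
     = - (b ^+ 2 + E%:Z * a * b + C%:Z * a ^+ 2)%:P.
    rewrite /p1 /p2 /quad_poly -!mul_polyC; ring.
  by rewrite hI oppr0.
have hd : p1 %| quad_poly E%:Z C%:Z.
  by rewrite -(dvdpZr p1 (quad_poly E%:Z C%:Z) (expf_neq0 2 ha)) -hp dvdp_mulr.
have hs1 : size p1 = 2%N by rewrite /p1 size_MXaddC polyC_eq0 (negPf ha) /= size_polyC ha.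
have := (hirr.2 p1); rewrite hs1 => /(_ isT hd) /eqp_size.
by rewrite hs1 hsz.
Qed.

Lemma conj_root (R : realType) (E C : nat) (beta : R)
  (hmin : is_quadratic_integer_with_minpoly (quad_poly E%:Z C%:Z) beta)
  (P : {poly int}) : (map_poly intr P).[beta] = 0 ->
  (map_poly intr P).[E%:R - beta] = 0.
Proof.
case: (hmin) => hmon hsz _ hroot.
have hdiv := Pdiv.IdomainMonic.divp_eq hmon P.
set q := quad_poly E%:Z C%:Z in hdiv hmon hsz hroot.
set r := P %% q in hdiv.
have hr : (size r <= 2)%N.
  have : (size r < size q)%N by rewrite ltn_modp -size_poly_gt0 hsz.
  by rewrite hsz.
have ev : forall x : R, (map_poly intr P).[x] =
    (map_poly intr (P %/ q)).[x] * (map_poly intr q).[x] + ((r`_0)%:~R + (r`_1)%:~R * x).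
  move=> x; rewrite {1}hdiv rmorphD rmorphM /= hornerD hornerM (@hornerW r 2 R x hr).
  by rewrite !big_ord_recr big_ord0 /= expr0 expr1 mulr1 add0r.
move/eqP: hroot => hroot.
rewrite ev hroot mulr0 add0r => h0.
have h1 : r`_1 = 0 by apply: (@no_lin_root R E C beta hmin _ (r`_0)); rewrite addrC.
move: h0; rewrite h1 mul0r addr0 => h0.
rewrite ev h0 h1 mul0r addr0 qval.
move: hroot; rewrite qval => hq.
have -> : (E%:R - beta) ^+ 2 - E%:R * (E%:R - beta) + C%:R = 0 by rewrite -hq; ring.
by rewrite mulr0 ?addr0.
Qed.
Lemma term_le (f : {poly int}) (R : realType) (x : R) i : nonneg_coefs f -> 0 <= x ->
  (f`_i)%:~R * x ^+ i <= (map_poly intr f).[x].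
Proof.
move=> hf hx.
have hN : (size f <= maxn (size f) i.+1)%N by rewrite leq_maxl.
have hi : (i < maxn (size f) i.+1)%N by rewrite leq_max ltnSn orbT.
rewrite (@hornerW f _ R x hN) (bigD1 (Ordinal hi)) //= lerDl.
apply: sumr_ge0 => j _; apply: mulr_ge0; last exact: exprn_ge0.
by rewrite ler0z.
Qed.

Lemma main_real (R : realType) (r s : R) (E n : nat) (f : {poly int})
  (hs : 0 < s) (hrs : s < r) (hsum : r + s = E%:R) (hr2 : r + s < r ^+ 2)
  (hr1 : 1 <= r) (hf : nonneg_coefs f)
  (hvr : (map_poly intr f).[r] = E%:R * r ^+ n)
  (hvs : (map_poly intr f).[s] = E%:R * s ^+ n)
  (hne : f != E%:Z *: 'X^n) :
  exists a : 'I_n.+1 -> int,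
    (forall i, 0 <= a i) /\
    f = 'X^(n.+1) + \sum_(i < n.+1) (a i)%:P * 'X^i :> {poly int}.
Proof.
have hr0 : 0 < r by apply: lt_trans hrs.
have hrn : 0 < r ^+ n by apply: exprn_gt0.
have hge1 : forall i, f`_i != 0 -> 1 <= (f`_i)%:~R :> R.
  move=> i hi; rewrite ler1z; have := hf i; lia.
have hbig : forall i, (n.+2 <= i)%N -> f`_i = 0.
  move=> i hi; apply/eqP/negPn/negP => hne0.
  have t := @term_le f R r i hf (ltW hr0).
  have h1 := hge1 i hne0.
  have hx : r ^+ (n.+2) <= r ^+ i := ler_weXn2l hr1 hi.
  have hx2 : r ^+ (n.+2) = r ^+ 2 * r ^+ n by rewrite -exprD.
  rewrite hvr -hsum in t; rewrite hx2 in hx.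
  have hp1 : 0 <= ((f`_i)%:~R - 1) * r ^+ i.
    apply: mulr_ge0. lra. apply: exprn_ge0; lra.
  have hp2 : 0 < (r ^+ 2 - (r + s)) * r ^+ n by apply: mulr_gt0; lra.
  lra.
have hle1 : f`_(n.+1) <= 1.
  rewrite leNgt; apply/negP => h2.
  have t := @term_le f R r n.+1 hf (ltW hr0).
  have h2' : 2 <= (f`_(n.+1))%:~R :> R by rewrite (_ : 2 = 2%:~R) // ler_int; lia.
  rewrite hvr -hsum exprS in t.
  have hp1 : 0 <= ((f`_(n.+1))%:~R - 2) * (r * r ^+ n) by apply: mulr_ge0; [lra| apply: mulr_ge0; [lra| exact: ltW hrn]].
  have hp2 : 0 < (r - s) * r ^+ n by apply: mulr_gt0; lra.
  lra.
have h0 := hf n.+1; have : f`_(n.+1) = 0 \/ f`_(n.+1) = 1 by lia.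
case => hc; last first.
  exists (fun i : 'I_n.+1 => f`_i); split; first by move=> i; apply: hf.
  apply/polyP => k; rewrite coefD coefXn coef_sum.
  under eq_bigr do rewrite coefCM coefXn.
  case: (ltnP k n.+1) => hk.
    rewrite ltn_eqF // add0r (bigD1 (Ordinal hk)) //= eqxx mulr1 big1 ?addr0 //.
    move=> i hi; rewrite (_ : (k == i) = false) ?mulr0 //; apply/negbTE.
    apply: contra hi => /eqP h; apply/eqP/val_inj => /=; by rewrite h.
  rewrite big1 ?addr0; last first.
    move=> i _; rewrite (_ : (k == i) = false) ?mulr0 //.
    by apply/negbTE; rewrite neq_ltn (leq_trans (ltn_ord i) hk) orbT.
  case: (eqVneq k n.+1) => [-> | hkn]; first by rewrite hc.
  by rewrite hbig //; rewrite ltn_neqAle eq_sym hkn hk.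
have hsmall : (size f <= n.+1)%N.
  apply/leq_sizeP => j hj; case: (eqVneq j n.+1) => [-> // | hjn].
  by apply: hbig; rewrite ltn_neqAle eq_sym hjn hj.
have hvr0 := hvr.
rewrite (@hornerW f _ R r hsmall) in hvr.
rewrite (@hornerW f _ R s hsmall) in hvs.
have key : \sum_(i < n.+1) (f`_i)%:~R * (r ^+ n * s ^+ i - s ^+ n * r ^+ i) = 0 :> R.
  have e : r ^+ n * (\sum_(i < n.+1) (f`_i)%:~R * s ^+ i)
         - s ^+ n * (\sum_(i < n.+1) (f`_i)%:~R * r ^+ i) = 0.
    by rewrite hvr hvs; ring.
  rewrite -[RHS]e !mulr_sumr -sumrB; apply: eq_bigr => i _; ring.
have hpos : forall i : nat, (i < n)%N -> 0 < r ^+ n * s ^+ i - s ^+ n * r ^+ i.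
  move=> i hi; have [k hk] : exists k, n = (i + k.+1)%N by exists (n - i.+1)%N; lia.
  rewrite hk !exprD.
  have : s ^+ k.+1 < r ^+ k.+1 by rewrite ltrXn2r //; lra.
  have hri : 0 < r ^+ i * s ^+ i by apply: mulr_gt0; apply: exprn_gt0.
  move=> hlt.
  have : 0 < (r ^+ i * s ^+ i) * (r ^+ k.+1 - s ^+ k.+1) by apply: mulr_gt0; lra.
  set A := r ^+ i; set B := s ^+ i; set X := r ^+ k.+1; set Y := s ^+ k.+1.
  move=> h; have -> : A * X * B - B * Y * A = A * B * (X - Y) by ring.
  exact: h.
have hzero : forall i : nat, (i < n)%N -> f`_i = 0.
  move=> i hi; have hin : (i < n.+1)%N := ltnW hi.
  have hnn : forall j : 'I_n.+1, true ->
      0 <= (f`_j)%:~R * (r ^+ n * s ^+ j - s ^+ n * r ^+ j) :> R.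
    move=> j _; apply: mulr_ge0; first by rewrite ler0z.
    have := ltn_ord j; rewrite ltnS leq_eqVlt => /orP [/eqP -> | hj].
      by rewrite mulrC subrr.
    exact: ltW (hpos _ hj).
  have := psumr_eq0P hnn key (i := Ordinal hin) isT.
  move/eqP; rewrite mulf_eq0 => /orP [|].
    by rewrite intr_eq0 => /eqP.
  by move=> /eqP h; have := hpos i hi; rewrite /= h ltxx.
have hfn : f = (f`_n) *: 'X^n.
  apply/polyP => k; rewrite coefZ coefXn.
  case: (ltngtP k n) => hk.
  - by rewrite hzero // mulr0.
  - rewrite mulr0; case: (eqVneq k n.+1) => [-> // | hkn].
    by apply: hbig; rewrite ltn_neqAle eq_sym hkn hk.
  - by rewrite hk ?eqxx ?mulr1.
have hcn : f`_n = E%:Z.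
  move: hvr0; rewrite {1}hfn map_polyZ map_polyXn hornerZ hornerXn.
  move/(mulIf (lt0r_neq0 hrn)) => h.
  by apply: (@intr_inj R); rewrite h.
by move: hne; rewrite {1}hfn hcn eqxx.
Qed.

Lemma rcond (R : realType) (r t : R) : 0 < t -> t < r -> 1 <= (r - t) ^+ 2 ->
  1 <= r /\ r + t < r ^+ 2.
Proof.
move=> ht htr h; have h1 : 1 <= r - t by nra.
split; first lra.
have : 0 < (r - 1) * (r - 1) by apply: mulr_gt0; lra.
nra.
Qed.

Theorem lemma10 (R : realType) (beta : R) (E C : nat) (n : nat)
  (hE : (1 <= E)%N) (hC : (1 <= C)%N)
  (hmin : is_quadratic_integer_with_minpoly (quad_poly E%:Z C%:Z) beta)
  (htp : totally_positive (quad_poly E%:Z C%:Z) beta)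
  (f : {poly int}) (hf : nonneg_coefs f)
  (hval : (map_poly intr f).[beta] = E%:R * beta ^+ n)
  (hne : f != E%:Z *: 'X^n) :
  exists a : 'I_n.+1 -> int,
    (forall i, 0 <= a i) /\
    f = 'X^(n.+1) + \sum_(i < n.+1) (a i)%:P * 'X^i :> {poly int}.
Proof.
case: htp => hb0 hpos.
have hq : beta ^+ 2 - E%:R * beta + C%:R = 0.
  by case: hmin => _ _ _ /eqP; rewrite qval.
set s := E%:R - beta.
have hs0 : 0 < s.
  apply: hpos; rewrite /root qval; apply/eqP; rewrite -hq /s; ring.
have hvs : (map_poly intr f).[s] = E%:R * s ^+ n.
  have h := @conj_root R E C beta hmin (f - E%:Z *: 'X^n).
  move: h; rewrite rmorphB /= map_polyZ map_polyXn !hornerE hval subrr.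
  move=> /(_ erefl) /eqP; rewrite subr_eq0 => /eqP ->.
  by [].
have hneq : beta != s.
  apply/negP => /eqP he.
  have := @no_lin_root R E C beta hmin 2 (- E%:Z).
  have -> : ((2 : int)%:~R : R) * beta + (- E%:Z)%:~R = 0.
    rewrite rmorphN /=; have -> : ((E%:Z)%:~R : R) = E%:R by [].
    rewrite (_ : (2:int)%:~R = 2 :> R) //; move: he; rewrite /s; lra.
  by move=> /(_ erefl).
have hd : (beta - s) ^+ 2 = (E ^ 2)%N%:R - (4 * C)%N%:R :> R.
  have -> : (beta - s) ^+ 2 = (E%:R) ^+ 2 - 4 * C%:R + 4 * (beta ^+ 2 - E%:R * beta + C%:R) :> R.
    by rewrite /s; ring.
  by rewrite hq natrX natrM; ring.
have hd1 : 1 <= (beta - s) ^+ 2.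
  have hp : 0 < (beta - s) ^+ 2.
    by rewrite exprn_even_gt0 //= subr_eq0.
  move: hp; rewrite hd subr_gt0 ltr_nat => hlt.
  by rewrite -natrB ?(ltnW hlt) // ler1n subn_gt0.
have hsum : beta + s = E%:R by rewrite /s; ring.
case: (ltgtP beta s) => hbs.
- have hd1' : 1 <= (s - beta) ^+ 2 by rewrite -sqrrN opprB.
  have [h1 h2] := @rcond R s beta hb0 hbs hd1'.
  apply: (@main_real R s beta E n f hb0 hbs) => //; try by rewrite addrC.
- have [h1 h2] := @rcond R beta s hs0 hbs hd1.
  exact: (@main_real R beta s E n f hs0 hbs hsum h2 h1 hf hval hvs hne).
- by move: hneq; rewrite hbs eqxx.
Qed.
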